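(* Suppose $G=(V,E)$ is a complete graph whose nonnegative edge costs $c$ satisfy the triangle inequality, and let $R\subseteq V$ be the terminal set. Then the cost of a minimum spanning tree of the induced subgraph $G[R]$ is at most twice the optimal value of the hypergraphic LP \[ \min \sum_K C_K x_K \quad\text{s.t.}\quad \sum_{K:\,K\cap S\neq\varnothing} x_K(|K\cap S|-1)\le |S|-1\ \ \forall\, \varnothing\neq S\subseteq R,\quad \sum_K x_K(|K|-1)=|R|-1,\quad x\ge 0. \]
   Context: For $K\subseteq R$ with $|K|\ge2$, a full component on $K$ is a tree in $G$ whose leaf set is exactly $K$ and whose internal vertices all lie in $V\setminus R$; $C_K$ is the minimum cost of a full component on $K$, and the LP variables $x_K$ range over such $K$ for which a full component exists. *)

(* Defs.v *)
From HB Require Import structures.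
From mathcomp Require Import all_boot all_order all_algebra.
From Stdlib Require Import ClassicalEpsilon.
Set Implicit Arguments. Unset Strict Implicit. Unset Printing Implicit Defensive.
Import Order.TTheory GRing.Theory Num.Theory.
Local Open Scope ring_scope.

(* Since G is the
   complete graph on V, every 2-subset of V is an edge of G. *)
Definition asbool (P : Prop) : bool :=
  if excluded_middle_informative P then true else false.

Section Graphs.
Variable V : finType.

Definition is_edge (e : {set V}) : bool := #|e| == 2%N.

Definition adj (E : {set {set V}}) : rel V := fun u v => [set u; v] \in E.

Definition verts (E : {set {set V}}) : {set V} := \bigcup_(e in E) e.

Definition deg (E : {set {set V}}) (v : V) : nat := #|[set e in E | v \in e]|.

Definition leaves (E : {set {set V}}) : {set V} := [set v | deg E v == 1%N].

Definition internal (E : {set {set V}}) : {set V} := verts E :\: leaves E.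

Definition acyclic (E : {set {set V}}) : Prop :=
  forall p : seq V, uniq p -> (2 < size p)%N -> ~~ cycle (adj E) p.

Definition connected_on (E : {set {set V}}) (W : {set V}) : Prop :=
  forall u v, u \in W -> v \in W -> connect (adj E) u v.

Definition is_tree (E : {set {set V}}) : Prop :=
  [/\ {in E, forall e, is_edge e}, connected_on E (verts E) & acyclic E].

Definition is_full_component (R K : {set V}) (E : {set {set V}}) : Prop :=
  [/\ is_tree E, leaves E = K & internal E \subset ~: R].

Definition is_spanning_tree (R : {set V}) (E : {set {set V}}) : Prop :=
  [/\ {in E, forall e, is_edge e && (e \subset R)}, connected_on E R & acyclic E].

End Graphs.

Section Costs.
Variables (V : finType) (F : realFieldType).
Variable c : {set V} -> F.

Definition tree_cost (E : {set {set V}}) : F := \sum_(e in E) c e.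

Definition has_full_component (R K : {set V}) : Prop :=
  exists E, is_full_component R K E.

(* C_K: minimum cost of a full component on K (meaningful when one exists) *)
Definition CK (R K : {set V}) : F :=
  tree_cost (Order.arg_min set0
    (fun E : {set {set V}} => asbool (is_full_component R K E)) tree_cost).

Definition mst_cost (R : {set V}) : F :=
  tree_cost (Order.arg_min set0
    (fun E : {set {set V}} => asbool (is_spanning_tree R E)) tree_cost).

Definition lp_index (R K : {set V}) : bool :=
  [&& K \subset R, (2 <= #|K|)%N & asbool (has_full_component R K)].

Definition lp_feasible (R : {set V}) (x : {set V} -> F) : Prop :=
  [/\ (forall K, lp_index R K -> 0 <= x K),
      (forall S : {set V}, S \subset R -> S != set0 ->
         \sum_(K | lp_index R K && (K :&: S != set0))
            x K * (#|K :&: S|%:R - 1) <= #|S|%:R - 1)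
    & \sum_(K | lp_index R K) x K * (#|K|%:R - 1) = #|R|%:R - 1].

Definition lp_objective (R : {set V}) (x : {set V} -> F) : F :=
  \sum_(K | lp_index R K) CK R K * x K.

End Costs.

(* Main.v *)
Require Import Defs.
From HB Require Import structures.
From mathcomp Require Import all_boot all_order all_algebra.
From Stdlib Require Import ClassicalEpsilon.
Import Order.TTheory GRing.Theory Num.Theory.
Local Open Scope ring_scope.
Set Implicit Arguments. Unset Strict Implicit. Unset Printing Implicit Defensive.

Definition cnonneg (V : finType) (F : realFieldType) (c : {set V} -> F) :=
  forall e : {set V}, is_edge e -> 0 <= c e.
Definition ctri (V : finType) (F : realFieldType) (c : {set V} -> F) :=
  forall u v w : V, u != v -> v != w -> u != w ->
     c [set u; w] <= c [set u; v] + c [set v; w].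

Definition pc (V : finType) (F : realFieldType) (c : {set V} -> F) (x y : V) : F :=
  if x == y then 0 else c [set x; y].

Fixpoint pcost (V : finType) (F : realFieldType) (c : {set V} -> F) (x : V) (s : seq V) : F :=
  match s with [::] => 0 | y :: s' => pc c x y + pcost c y s' end.

Definition cyc (V : finType) (F : realFieldType) (c : {set V} -> F) (s : seq V) : F :=
  match s with [::] => 0 | x :: t => pcost c x (rcons t x) end.

Lemma edge2 (V : finType) (x y : V) : x != y -> is_edge [set x; y].
Proof. by move=> H; rewrite /is_edge cards2 H. Qed.

Lemma pc_ge0 (V : finType) (F : realFieldType) (c : {set V} -> F) x y :
  cnonneg c -> 0 <= pc c x y.
Proof. by move=> Hc; rewrite /pc; case: eqP => // /eqP H; apply: Hc; apply: edge2. Qed.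

Lemma pc_sym (V : finType) (F : realFieldType) (c : {set V} -> F) x y :
  pc c x y = pc c y x.
Proof. by rewrite /pc eq_sym setUC. Qed.

Lemma pc_tri (V : finType) (F : realFieldType) (c : {set V} -> F) x y z :
  cnonneg c -> ctri c -> pc c x z <= pc c x y + pc c y z.
Proof.
move=> Hc Ht; rewrite /pc.
case: (eqVneq x z) => [->|xz].
  by rewrite addr_ge0 // -/(pc c _ _) pc_ge0.
case: (eqVneq x y) => [<-|xy]; first by rewrite add0r (negbTE xz).
case: (eqVneq y z) => [->|yz]; first by rewrite ?eqxx ?(negbTE xz) ?(negbTE xy) addr0.
by rewrite ?(negbTE xz) ?(negbTE xy) ?(negbTE yz); exact: Ht.
Qed.

Lemma pcost_ge0 (V : finType) (F : realFieldType) (c : {set V} -> F) x s :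
  cnonneg c -> 0 <= pcost c x s.
Proof. move=> Hc; elim: s x => //= y s IH x; by rewrite addr_ge0 ?pc_ge0. Qed.

Lemma cyc_ge0 (V : finType) (F : realFieldType) (c : {set V} -> F) s :
  cnonneg c -> 0 <= cyc c s.
Proof. by case: s => //= x t Hc; apply: pcost_ge0. Qed.

Lemma pcost_cat (V : finType) (F : realFieldType) (c : {set V} -> F) x s t :
  pcost c x (s ++ t) = pcost c x s + pcost c (last x s) t.
Proof. by elim: s x => [|y s IH] x /=; rewrite ?add0r // IH addrA. Qed.

Lemma pcost_rcons (V : finType) (F : realFieldType) (c : {set V} -> F) x s y :
  pcost c x (rcons s y) = pcost c x s + pc c (last x s) y.
Proof. by rewrite -cats1 pcost_cat /= addr0. Qed.

Lemma cyc_rot (V : finType) (F : realFieldType) (c : {set V} -> F) p a q :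
  cyc c (p ++ a :: q) = cyc c (a :: q ++ p).
Proof.
case: p => [|x p] /=; first by rewrite cats0.
rewrite rcons_cat /= pcost_cat /= pcost_rcons.
rewrite rcons_cat pcost_cat /=.
by rewrite pcost_rcons [RHS]addrA [RHS]addrC -!addrA.
Qed.

Lemma pcost_pairmap (V : finType) (F : realFieldType) (c : {set V} -> F) x s :
  pcost c x s = \sum_(p <- pairmap pair x s) pc c p.1 p.2.
Proof. by elim: s x => [|y s IH] x /=; rewrite ?big_nil // big_cons IH. Qed.

Lemma pcost_short (V : finType) (F : realFieldType) (c : {set V} -> F) x z w r :
  cnonneg c -> ctri c -> pcost c x (w :: r) <= pc c x z + pcost c z (w :: r).
Proof.
move=> Hc Ht /=; rewrite addrA lerD2r; exact: pc_tri.
Qed.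

Lemma pcost_filter (V : finType) (F : realFieldType) (c : {set V} -> F) (P : pred V) x t y :
  cnonneg c -> ctri c -> P y -> pcost c x (rcons (filter P t) y) <= pcost c x (rcons t y).
Proof.
move=> Hc Ht Py; elim: t x => [|z t IH] x //=.
case: (P z) => /=; first by rewrite lerD2l.
apply: le_trans (IH x) _.
clear IH; case: t => [|w r]; exact: pcost_short.
Qed.

Lemma cyc_filter (V : finType) (F : realFieldType) (c : {set V} -> F) (P : pred V) x t :
  cnonneg c -> ctri c -> P x -> cyc c (filter P (x :: t)) <= cyc c (x :: t).
Proof. by move=> Hc Ht Px /=; rewrite Px /=; apply: pcost_filter. Qed.

Lemma cyc_splice (V : finType) (F : realFieldType) (c : {set V} -> F) a t1 b t2 :
  cnonneg c -> ctri c ->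
  cyc c (a :: t1 ++ b :: t2) <= cyc c (a :: t1) + cyc c (b :: t2) + 2%:R * pc c a b.
Proof.
move=> Hc Ht /=.
rewrite rcons_cat pcost_cat /= pcost_rcons !pcost_rcons.
set A := pcost c a t1; set B := pcost c b t2; set la := last a t1; set lb := last b t2.
have h1 := pc_tri la a b Hc Ht.
have h2 := pc_tri lb b a Hc Ht.
rewrite (pc_sym c b a) in h2.
rewrite mulr2n mulrDl !mul1r.
set ab := pc c a b in h1 h2 *.
apply: (le_trans (y := A + ((pc c la a + ab) + (B + (pc c lb b + ab))))).
  by rewrite lerD2l lerD // lerD2l.
by rewrite [X in X <= _](AC (1*(2*(1*2))) (((1*2)*(4*5))*(3*6))).
Qed.


Lemma sum_subset_le (I : finType) (F : realFieldType) (A B : {set I}) (g : I -> F) :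
  A \subset B -> {in B, forall i, 0 <= g i} -> \sum_(i in A) g i <= \sum_(i in B) g i.
Proof.
move=> AB Hg; rewrite [X in _ <= X](big_setID A) /= (setIidPr AB) lerDl.
by apply: sumr_ge0 => i; rewrite in_setD => /andP[_ /Hg].
Qed.

Lemma adj_sym (V : finType) (E : {set {set V}}) : symmetric (adj E).
Proof. by move=> x y; rewrite /adj setUC. Qed.

Lemma conn_sym (V : finType) (E : {set {set V}}) x y :
  connect (adj E) x y = connect (adj E) y x.
Proof. exact: (sym_connect_sym (@adj_sym V E)). Qed.

Lemma conn_set0 (V : finType) (v u : V) : connect (adj set0) v u -> u = v.
Proof.
move/connectP=> [[|w p] /= Hp ->] //.
by move: Hp; rewrite /adj inE.
Qed.

Lemma conn_split (V : finType) (E : {set {set V}}) (a b v u : V) :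
  let E' := E :\ [set a; b] in
  connect (adj E) v u ->
  connect (adj E') v u \/
  ((connect (adj E') a v \/ connect (adj E') b v) /\
   (connect (adj E') a u \/ connect (adj E') b u)).
Proof.
move=> E'.
pose Pv x := connect (adj E') v x \/
  ((connect (adj E') a v \/ connect (adj E') b v) /\
   (connect (adj E') a x \/ connect (adj E') b x)).
suff H : forall x p, Pv x -> path (adj E) x p -> Pv (last x p).
  by move/connectP=> [p Hp ->]; apply: H => //; left; apply: connect0.
move=> x p; elim: p x => [|y p IH] x //= Hx /andP[Hxy Hp].
apply: IH Hp.
have [He|He] := eqVneq [set x; y] [set a; b].
  have Hy : y \in [set a; b] by rewrite -He !inE eqxx orbT.
  have Hx' : x \in [set a; b] by rewrite -He !inE eqxx.
  have Hyab : connect (adj E') a y \/ connect (adj E') b y.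
    by move: Hy; rewrite !inE => /orP[] /eqP ->; [left|right]; apply: connect0.
  right; split => //.
  case: Hx => [Hvx|[]//].
  move: Hx'; rewrite !inE => /orP[] /eqP Hx; subst x; [left|right]; by rewrite conn_sym.
have Hxy' : adj E' x y by rewrite /adj /E' !inE He.
case: Hx => [Hvx|[H1 H2]].
  by left; apply: connect_trans Hvx (connect1 Hxy').
right; split => //.
by case: H2 => H2; [left|right]; apply: connect_trans H2 (connect1 Hxy').
Qed.

Lemma conn_restrict (V : finType) (E : {set {set V}}) (a u : V) :
  connect (adj E) a u ->
  connect (adj [set f in E | f \subset [set z | connect (adj E) a z]]) a u.
Proof.
set C := [set z | connect (adj E) a z].
suff H : forall x p, connect (adj E) a x ->
   connect (adj [set f in E | f \subset C]) a x ->
   path (adj E) x p -> connect (adj [set f in E | f \subset C]) a (last x p).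
  by move/connectP=> [p Hp ->]; apply: H => //; apply: connect0.
move=> x p; elim: p x => [|y p IH] x //= H1 H2 /andP[Hxy Hp].
have Hay : connect (adj E) a y by apply: connect_trans H1 (connect1 Hxy).
apply: IH Hp => //.
apply: connect_trans H2 (connect1 _).
rewrite /adj inE; apply/andP; split => //; apply/subsetP => z; rewrite !inE => /orP[] /eqP -> //.
Qed.

Lemma cover_nil (V : finType) (F : realFieldType) (c : {set V} -> F) (v : V) :
  exists s : seq V, (forall u, connect (adj set0) v u -> u \in s) /\
     cyc c s <= 2%:R * tree_cost c set0.
Proof.
exists [:: v]; split; first by move=> u /conn_set0 ->; rewrite inE.
by rewrite /tree_cost big_set0 mulr0 /= /pc eqxx addr0.
Qed.

Lemma cover_cycle (V : finType) (F : realFieldType) (c : {set V} -> F) :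
  cnonneg c -> ctri c -> forall n (E : {set {set V}}), (#|E| <= n)%N ->
  {in E, forall e, is_edge e} -> forall v : V,
  exists s : seq V, (forall u, connect (adj E) v u -> u \in s) /\
     cyc c s <= 2%:R * tree_cost c E.
Proof.
move=> Hc Ht n; elim: n => [|n IH] E HE Hedge v.
  by move: HE; rewrite leqn0 cards_eq0 => /eqP ->; apply: cover_nil.
have [->|] := eqVneq E set0; first exact: cover_nil.
move/set0Pn => [e He].
have /cards2P [a [b [ab De]]] := Hedge e He.
subst e.
set E' := E :\ [set a; b].
have HE' : (#|E'| <= n)%N by move: HE; rewrite (cardsD1 [set a; b] E) He add1n ltnS.
have Hedge' : {in E', forall e, is_edge e}.
  by move=> f; rewrite /E' in_setD1 => /andP[_ /Hedge].
have Hcost : tree_cost c E = c [set a; b] + tree_cost c E' by rewrite /tree_cost (big_setD1 _ He).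
have Hce : 0 <= c [set a; b] := Hc _ (Hedge _ He).
have H2ge0 : (0 : F) <= 2%:R by rewrite ler0n.
have [Hall|] := boolP [forall u, connect (adj E) v u ==> connect (adj E') v u].
  have [s [Hs1 Hs2]] := IH E' HE' Hedge' v.
  exists s; split.
    by move=> u Hu; apply: Hs1; move/forallP: Hall => /(_ u) /implyP; apply.
  apply: le_trans Hs2 _; rewrite Hcost ler_wpM2l // lerDr //.
move/forallPn => [u0]; rewrite negb_imply => /andP[H1 H2].
have [H|[Hv Hu0]] := conn_split a b H1; first by rewrite H in H2.
have nab : ~~ connect (adj E') a b.
  apply/negP => Hab; move/negP: H2; apply.
  have Ha_of : forall z, connect (adj E') a z \/ connect (adj E') b z -> connect (adj E') a z.
    by move=> z [//|Hbz]; apply: connect_trans Hab Hbz.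
  by apply: connect_trans (Ha_of u0 Hu0); rewrite conn_sym; apply: Ha_of.
set Ca := [set z | connect (adj E') a z].
set Cb := [set z | connect (adj E') b z].
set Ea := [set f in E' | f \subset Ca].
set Eb := [set f in E' | f \subset Cb].
have sEa : Ea \subset E' by apply/subsetP => f; rewrite inE => /andP[].
have sEb : Eb \subset E' by apply/subsetP => f; rewrite inE => /andP[].
have HEa : (#|Ea| <= n)%N by apply: leq_trans HE'; apply: subset_leq_card.
have HEb : (#|Eb| <= n)%N by apply: leq_trans HE'; apply: subset_leq_card.
have Hedgea : {in Ea, forall e, is_edge e} by move=> f /(subsetP sEa) /Hedge'.
have Hedgeb : {in Eb, forall e, is_edge e} by move=> f /(subsetP sEb) /Hedge'.
have [sa [Hsa1 Hsa2]] := IH Ea HEa Hedgea a.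
have [sb [Hsb1 Hsb2]] := IH Eb HEb Hedgeb b.
have Ha_in := Hsa1 a (connect0 _ a).
have Hb_in := Hsb1 b (connect0 _ b).
case/splitPr: Ha_in Hsa1 Hsa2 => p q Hsa1 Hsa2.
case/splitPr: Hb_in Hsb1 Hsb2 => p' q' Hsb1 Hsb2.
rewrite cyc_rot in Hsa2; rewrite cyc_rot in Hsb2.
exists (a :: (q ++ p) ++ b :: (q' ++ p')); split.
  move=> u Hu.
  have Hu' : connect (adj E') a u \/ connect (adj E') b u.
    have [Hvu|[_ //]] := conn_split a b Hu.
    by case: Hv => Hv; [left|right]; apply: connect_trans Hv Hvu.
  case: Hu' => Hu'.
    have := Hsa1 u (conn_restrict Hu').
    by rewrite !(mem_cat, in_cons) => /orP[->|/orP[->|->]]; rewrite ?orbT.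
  have := Hsb1 u (conn_restrict Hu').
  by rewrite !(mem_cat, in_cons) => /orP[->|/orP[->|->]]; rewrite ?orbT.
have Hdis : [disjoint Ea & Eb].
  rewrite disjoint_subset; apply/subsetP => f Hfa'; rewrite inE; apply/negP => Hfb'.
  move: Hfa' Hfb'; rewrite [f \in Ea]inE [f \in Eb]inE => /andP[Hf1 Hfa] /andP[_ Hfb].
  have /card_gt0P [z Hz] : (0 < #|f|)%N by move: (Hedge' f Hf1); rewrite /is_edge => /eqP ->.
  move: (subsetP Hfa z Hz) (subsetP Hfb z Hz); rewrite !inE => Haz Hbz.
  by move/negP: nab; apply; apply: connect_trans Haz _; rewrite conn_sym.
have HXY : tree_cost c Ea + tree_cost c Eb <= tree_cost c E'.
  rewrite /tree_cost -bigU //.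
  rewrite (eq_bigl (fun f => f \in Ea :|: Eb)); last by move=> f; rewrite !inE.
  apply: sum_subset_le; first by rewrite subUset sEa sEb.
  by move=> f /Hedge' /Hc.
apply: le_trans (cyc_splice _ _ _ _ Hc Ht) _.
rewrite /pc (negbTE ab).
apply: (le_trans (y := 2%:R * tree_cost c Ea + 2%:R * tree_cost c Eb + 2%:R * c [set a; b])).
  by rewrite lerD // lerD.
rewrite -!mulrDr ler_wpM2l // Hcost addrC lerD2l.
exact: HXY.
Qed.


Lemma argmin_any (I : finType) (F : realFieldType) (P : pred I) (g : I -> F) (i0 i1 : I) :
  P i1 -> P (Order.arg_min i0 P g) /\ (forall j, P j -> g (Order.arg_min i0 P g) <= g j).
Proof.
move=> Pi1.
have H := @extremumP F I <=%O i1 P g (@lexx _ F) (@le_trans _ F) (@le_total _ F) Pi1.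
rewrite /Order.arg_min /extremum.
move: H; rewrite /extremum; case: pickP => [i Hi | no_i] H.
  by move: H => /= [i2 Pi2 Hi2]; split.
case: H => i' Pi' Hi'; exfalso.
by have := no_i i'; rewrite /= Pi' /=; move/negP; apply; apply/forall_inP.
Qed.

Definition relf (V : finType) (f : V -> V) (E : {set {set V}}) : rel V :=
  fun u w => adj E u w || (f u == f w).

Lemma mulrn_le (F : realFieldType) (x : F) m n : 0 <= x -> (m <= n)%N -> x *+ m <= x *+ n.
Proof. move=> Hx Hmn; rewrite -(mulr_natr x m) -(mulr_natr x n). apply: ler_wpM2l => //. by rewrite ler_nat. Qed.

Lemma sum_U1_le (V : finType) (F : realFieldType) (g : {set V} -> F) e (E : {set {set V}}) :
  0 <= g e -> \sum_(f in e |: E) g f <= g e + \sum_(f in E) g f.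
Proof.
move=> Hg; have [He|He] := boolP (e \in E).
  by rewrite (setUidPr _) ?sub1set // lerDr.
by rewrite big_setU1.
Qed.

Lemma rhs_ge0 (V : finType) (F : realFieldType) (c : {set V} -> F) (R : {set V})
  (L : seq (F * (V * V))) (f : V -> V) (l : F) :
  (forall t, t \in L -> [/\ 0 <= t.1, t.2.1 \in R & t.2.2 \in R]) ->
  (forall a b, a \in R -> b \in R -> f a != f b -> l <= pc c a b) ->
  0 <= \sum_(t <- L | f t.2.1 != f t.2.2) t.1 * (pc c t.2.1 t.2.2 - l).
Proof.
move=> HL Hl; rewrite big_seq_cond; apply: sumr_ge0 => t /andP[/HL [H1 H2 H3] Hf].
by rewrite mulr_ge0 // subr_ge0 Hl.
Qed.

Lemma sum_filter_le (T : eqType) (F : realFieldType) (L : seq T) (P Q : pred T) (g : T -> F) :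
  (forall t, t \in L -> P t -> Q t) -> (forall t, t \in L -> Q t -> 0 <= g t) ->
  \sum_(t <- L | P t) g t <= \sum_(t <- L | Q t) g t.
Proof.
elim: L => [|t L IH] H1 H2; first by rewrite !big_nil.
rewrite !big_cons.
have IH' : \sum_(t <- L | P t) g t <= \sum_(t <- L | Q t) g t.
  by apply: IH => s Hs; [apply: H1 | apply: H2]; rewrite inE Hs orbT.
have Ht := mem_head t L.
case HP: (P t); first by rewrite (H1 t Ht HP) lerD2l.
case HQ: (Q t) => //.
rewrite -[X in X <= _]add0r; apply: lerD IH'; exact: H2 Ht HQ.
Qed.

Lemma main_claim (V : finType) (F : realFieldType) (c : {set V} -> F) (R : {set V})
  (L : seq (F * (V * V))) :
  cnonneg c ->
  (forall t, t \in L -> [/\ 0 <= t.1, t.2.1 \in R & t.2.2 \in R]) ->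
  (forall f : V -> V, (#|f @: R|%:R : F) - 1 <= \sum_(t <- L | f t.2.1 != f t.2.2) t.1) ->
  forall n (f : V -> V), #|f @: R| = n.+1 -> forall l : F,
  (forall a b, a \in R -> b \in R -> f a != f b -> l <= pc c a b) ->
  exists E : {set {set V}}, [/\ (forall e, e \in E -> is_edge e && (e \subset R)),
     (#|E| <= n)%N,
     (forall u w, u \in R -> w \in R -> connect (relf f E) u w) &
     \sum_(e in E) (c e - l) <= \sum_(t <- L | f t.2.1 != f t.2.2) t.1 * (pc c t.2.1 t.2.2 - l)].
Proof.
move=> Hc HL Hpart n; elim: n => [|n IH] f Hcard l Hl.
  have /cards1P [y Hy] : #|f @: R| == 1%N by rewrite Hcard.
  have Hsame : forall u, u \in R -> f u = y.
    by move=> u Hu; have := imset_f f Hu; rewrite Hy inE => /eqP.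
  exists set0; split.
  - by move=> e; rewrite inE.
  - by rewrite cards0.
  - by move=> u w Hu Hw; apply: connect1; rewrite /relf (Hsame u Hu) (Hsame w Hw) eqxx orbT.
  - by rewrite big_set0; exact: (rhs_ge0 HL Hl).
have [u0 Hu0] : exists u0, u0 \in R.
  have : (0 < #|f @: R|)%N by rewrite Hcard.
  by move/card_gt0P => [y /imsetP [u0 Hu0 _]]; exists u0.
have : (0 < #|f @: R :\ f u0|)%N.
  by move: Hcard; rewrite (cardsD1 (f u0)) imset_f // add1n => [[->]].
move/card_gt0P => [y]; rewrite in_setD1 => /andP [Hy1 /imsetP [b0 Hb0 Hyb0]].
pose P := fun p : V * V => [&& p.1 \in R, p.2 \in R & f p.1 != f p.2].
have P0 : P (u0, b0) by rewrite /P /= Hu0 Hb0 /= -Hyb0 eq_sym.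
have [[a b] [Pab Hmin]] : exists p : V * V, P p /\ forall j, P j -> pc c p.1 p.2 <= pc c j.1 j.2.
  by exists (Order.arg_min (u0, b0) P (fun p => pc c p.1 p.2)); apply: argmin_any P0.
move: Pab => /and3P [Ha Hb fab].
have ab : a != b by apply: contraNneq fab => ->.
pose m := pc c a b.
have Hm : m = c [set a; b] by rewrite /m /pc (negbTE ab).
have Hlm : l <= m := Hl a b Ha Hb fab.
pose f' := fun x => if f x == f b then f a else f x.
have Himg : f' @: R = (f @: R) :\ f b.
  apply/setP => y'; apply/imsetP/setD1P.
    move=> [x Hx ->]; rewrite /f'; case: (eqVneq (f x) (f b)) => Hfx.
      by split; [exact: fab | exact: imset_f].
    by split; [exact: Hfx | exact: imset_f].
  move=> [Hy' /imsetP [x Hx Hxe]]; by exists x => //; rewrite /f' -Hxe (negbTE Hy').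
have Hcard' : #|f' @: R| = n.+1.
  by rewrite Himg; move: Hcard; rewrite (cardsD1 (f b)) imset_f // add1n => [[]].
have Hl' : forall u w, u \in R -> w \in R -> f' u != f' w -> m <= pc c u w.
  move=> u w Hu Hw Hf'; apply: (Hmin (u, w)); rewrite /P /= Hu Hw /=.
  by apply: contra Hf' => /eqP Heq; rewrite /f' Heq.
have [E' [HE'1 HE'2 HE'3 HE'4]] := IH f' Hcard' m Hl'.
exists ([set a; b] |: E'); split.
- move=> e; rewrite in_setU1 => /orP [/eqP -> | /HE'1 //].
  rewrite edge2 //=; apply/subsetP => z; rewrite !inE => /orP [] /eqP -> //.
- by rewrite cardsU1 -add1n; apply: leq_add (leq_b1 _) HE'2.
- move=> u w Hu Hw; apply: connect_sub (HE'3 u w Hu Hw) => x1 y1 /orP [Hadj | Hf'xy].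
    by apply: connect1; rewrite /relf /adj in_setU1; move: Hadj; rewrite /adj => ->; rewrite !orbT.
  have Hr : forall x y, f x == f y -> connect (relf f ([set a; b] |: E')) x y.
    by move=> ? ? H; apply: connect1; rewrite /relf H orbT.
  have hab : connect (relf f ([set a; b] |: E')) a b.
    by apply: connect1; rewrite /relf /adj in_setU1 eqxx.
  have hba : connect (relf f ([set a; b] |: E')) b a.
    by apply: connect1; rewrite /relf /adj in_setU1 setUC eqxx.
  move: Hf'xy; rewrite /f'.
  case: (eqVneq (f x1) (f b)) => Hx; case: (eqVneq (f y1) (f b)) => Hy' H.
  + by apply: Hr; rewrite Hx Hy'.
  + apply: connect_trans (Hr x1 b _) (connect_trans hba (Hr a y1 H)); by rewrite Hx.
  + apply: connect_trans (Hr x1 a H) (connect_trans hab (Hr b y1 _)); by rewrite Hy'.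
  + exact: Hr.
- have Hml : 0 <= m - l by rewrite subr_ge0.
  set RHSm := \sum_(t <- L | f t.2.1 != f t.2.2) t.1 * (pc c t.2.1 t.2.2 - m).
  set W := \sum_(t <- L | f t.2.1 != f t.2.2) t.1.
  have h2 : \sum_(e in E') (c e - l) = \sum_(e in E') (c e - m) + (m - l) *+ #|E'|.
    rewrite -sumr_const -big_split /=; apply: eq_bigr => e _.
    by rewrite addrA subrK.
  have h4 : \sum_(e in E') (c e - m) <= RHSm.
    apply: le_trans HE'4 _; apply: sum_filter_le.
      move=> t _; apply: contra => /eqP Heq; by rewrite /f' Heq.
    move=> t /HL [H1 H2 H3] Hf; rewrite mulr_ge0 // subr_ge0.
    by apply: (Hmin (t.2.1, t.2.2)); rewrite /P /= H2 H3.
  have h5 : \sum_(t <- L | f t.2.1 != f t.2.2) t.1 * (pc c t.2.1 t.2.2 - l) = RHSm + W * (m - l).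
    rewrite mulr_suml -big_split /=; apply: eq_bigr => t _.
    by rewrite -mulrDr addrA subrK.
  have hW : (n.+1%:R : F) <= W.
    by have := Hpart f; rewrite Hcard -natr1 addrK.
  apply: le_trans (sum_U1_le (g := fun e => c e - l) E' _) _; first by rewrite -Hm.
  rewrite -Hm h2 h5.
  apply: (le_trans (y := (m - l) *+ n.+1 + RHSm)).
    rewrite mulrS -[X in _ <= X]addrA lerD2l [X in _ <= X]addrC; apply: lerD => //.
    exact: mulrn_le.
  rewrite addrC lerD2l -mulr_natr [W * _]mulrC ler_wpM2l //.
Qed.


Lemma main_conn (V : finType) (F : realFieldType) (c : {set V} -> F) (R : {set V})
  (L : seq (F * (V * V))) :
  cnonneg c ->
  (forall t, t \in L -> [/\ 0 <= t.1, t.2.1 \in R & t.2.2 \in R]) ->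
  (forall f : V -> V, (#|f @: R|%:R : F) - 1 <= \sum_(t <- L | f t.2.1 != f t.2.2) t.1) ->
  exists E : {set {set V}}, [/\ (forall e, e \in E -> is_edge e && (e \subset R)),
     connected_on E R &
     tree_cost c E <= \sum_(t <- L) t.1 * pc c t.2.1 t.2.2].
Proof.
move=> Hc HL Hpart.
have Hsum0 : 0 <= \sum_(t <- L) t.1 * pc c t.2.1 t.2.2.
  rewrite big_seq; apply: sumr_ge0 => t /HL [H1 _ _]; by rewrite mulr_ge0 // pc_ge0.
have [R0|] := eqVneq R set0.
  exists set0; split => //.
  - by move=> e; rewrite inE.
  - by move=> u v; rewrite R0 inE.
  - by rewrite /tree_cost big_set0.
move/set0Pn => [r0 Hr0].
have Hcard : #|id @: R| = (#|R|.-1).+1.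
  by rewrite imset_id prednK //; apply/card_gt0P; exists r0.
have [E [H1 _ H3 H4]] := main_claim Hc HL Hpart Hcard (l := 0)
   (fun a b _ _ _ => pc_ge0 a b Hc).
exists E; split => //.
  move=> u v Hu Hv; apply: connect_sub (H3 u v Hu Hv) => x y /orP [Hadj|/eqP ->].
    exact: connect1.
  exact: connect0.
have -> : tree_cost c E = \sum_(e in E) (c e - 0) by apply: eq_bigr => e _; rewrite subr0.
apply: le_trans H4 _.
rewrite [X in _ <= X](eq_bigr (fun t => t.1 * (pc c t.2.1 t.2.2 - 0))); last by move=> t _; rewrite subr0.
apply: sum_filter_le; first by [].
by move=> t /HL [H1' _ _] _; rewrite mulr_ge0 // subr0 pc_ge0.
Qed.

Lemma asboolT (P : Prop) : P -> asbool P.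
Proof. by rewrite /asbool; case: excluded_middle_informative. Qed.

Lemma asboolP (P : Prop) : asbool P -> P.
Proof. by rewrite /asbool; case: excluded_middle_informative. Qed.

Lemma extract_tree (V : finType) (F : realFieldType) (c : {set V} -> F) (R : {set V})
  (E : {set {set V}}) :
  cnonneg c -> (forall e, e \in E -> is_edge e && (e \subset R)) -> connected_on E R ->
  mst_cost c R <= tree_cost c E.
Proof.
move=> Hc HE Hconn.
pose Q := fun T : {set {set V}} => (T \subset E) && asbool (connected_on T R).
have QE : Q E by rewrite /Q subxx asboolT.
case: (@arg_minnP _ E Q (fun T => #|T|) QE) => T /andP [TE /asboolP Tconn] Tmin.
have HT : is_spanning_tree R T.
  split => //.
    by move=> e /(subsetP TE) /HE.
  move=> p Up Hsz; apply/negP => Hcyc.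
  case: p Up Hsz Hcyc => [|x [|y q]] //= Up Hsz.
  rewrite rcons_path => /andP [Hxy /andP [Hpath Hlast]].
  move: Up; rewrite !inE negb_or => /andP [/andP [xy xq] /andP [yq Uq]].
  have q0 : q != [::] by case: q Hsz {Hpath Hlast xq yq Uq}.
  set T' := T :\ [set x; y].
  have HpT' : path (adj T') y q.
    apply: (@sub_in_path _ (predC1 x)); last first.
    - exact: Hpath.
    - by rewrite /= eq_sym xy /=; apply/allP => z Hz /=; apply: contraNneq xq => <-.
    move=> u w Hu Hw; rewrite /adj /T' in_setD1 => ->; rewrite andbT.
    apply/negP => /eqP He.
    have : x \in [set u; w] by rewrite He !inE eqxx.
    by rewrite !inE => /orP [] /eqP Hx; [move: Hu | move: Hw]; rewrite !inE Hx eqxx.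
  have Hz : last y q \in q by move: q0; case: (q) => // z q' _ /=; apply: mem_last.
  have HlT' : adj T' (last y q) x.
    rewrite /adj /T' in_setD1 andbC; move: Hlast; rewrite /adj => -> /=.
    apply/negP => /eqP He.
    have : y \in [set last y q; x] by rewrite He !inE eqxx orbT.
    rewrite !inE => /orP [] /eqP Hy.
      by move: yq; rewrite Hy Hz.
    by move: xy; rewrite Hy eqxx.
  have Hyx : connect (adj T') y x.
    by apply/connectP; exists (rcons q x); [rewrite rcons_path HpT' HlT' | rewrite last_rcons].
  have QT' : Q T'.
    rewrite /Q (subset_trans _ TE) ?subD1set //; apply: asboolT.
    move=> u v Hu Hv; apply: connect_sub (Tconn u v Hu Hv) => a b Hab.
    have [He|He] := eqVneq [set a; b] [set x; y]; last first.
      by apply: connect1; rewrite /adj /T' in_setD1 He.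
    have : a \in [set x; y] by rewrite -He !inE eqxx.
    have : b \in [set x; y] by rewrite -He !inE eqxx orbT.
    rewrite !inE => /orP [] /eqP -> /orP [] /eqP ->; rewrite ?connect0 //.
    by rewrite conn_sym.
  have := Tmin T' QT'.
  by rewrite (cardsD1 [set x; y] T) (_ : [set x; y] \in T = true) // add1n ltnn.
have [_ Hmin] := argmin_any (P := fun E => asbool (is_spanning_tree R E)) (tree_cost c) set0 (asboolT HT).
rewrite /mst_cost.
apply: le_trans (Hmin T (asboolT HT)) _.
apply: sum_subset_le => // e He.
by have /andP [He1 _] := HE e He; apply: Hc.
Qed.


Lemma fullcomp_path (V : finType) (F : realFieldType) (c : {set V} -> F) (R K : {set V})
  (E : {set {set V}}) :
  cnonneg c -> ctri c -> is_full_component R K E -> K != set0 ->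
  exists (k0 : V) (t : seq V), [/\ (forall z, z \in k0 :: t -> z \in K),
     (forall z, z \in K -> z \in k0 :: t) & pcost c k0 t <= 2%:R * tree_cost c E].
Proof.
move=> Hc Ht [[Hedge Hconn _] HK _] /set0Pn [k0 Hk0].
have KV : forall z, z \in K -> z \in verts E.
  move=> z; rewrite -HK inE /deg => /eqP Hd.
  have /card_gt0P [e] : (0 < #|[set e in E | z \in e]|)%N by rewrite Hd.
  by rewrite inE => /andP [He Hz]; apply/bigcupP; exists e.
have [s [Hs1 Hs2]] := cover_cycle Hc Ht (leqnn #|E|) Hedge k0.
have Hk0s : k0 \in s by apply: Hs1; apply: connect0.
case/splitPr: Hk0s Hs1 Hs2 => p q Hs1 Hs2.
rewrite cyc_rot in Hs2.
exists k0, (filter (mem K) (q ++ p)); split.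
- by move=> z; rewrite inE mem_filter => /orP [/eqP ->| /andP []].
- move=> z Hz; have := Hs1 z (Hconn _ _ (KV _ Hk0) (KV _ Hz)).
  rewrite inE mem_filter (_ : mem K z = true) //= !(mem_cat, in_cons).
  by move=> /orP [->|/orP [->|->]]; rewrite ?orbT.
- have H := @cyc_filter V F c (mem K) k0 (q ++ p) Hc Ht Hk0.
  have H' := le_trans H Hs2.
  apply: le_trans H'; rewrite /= Hk0 /= pcost_rcons lerDl; exact: pc_ge0.
Qed.

Lemma path_img (V : finType) (f : V -> V) (x : V) (t : seq V) :
  (#|f @: [set z | z \in x :: t]| <= 1 + count (fun p => f p.1 != f p.2) (pairmap pair x t))%N.
Proof.
elim: t x => [|y t IH] x.
  have -> : [set z | z \in [:: x]] = [set x] by apply/setP => z; rewrite !inE.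
  by rewrite imset_set1 cards1.
have -> : [set z | z \in [:: x, y & t]] = x |: [set z | z \in y :: t].
  by apply/setP => z; rewrite !inE.
rewrite imsetU1 cardsU1 /=.
have Hy : f y \in f @: [set z | z \in y :: t] by apply: imset_f; rewrite inE mem_head.
case: (eqVneq (f x) (f y)) => [->|_] /=; first by rewrite Hy /=; apply: IH.
by apply: leq_add (leq_b1 _) (IH y).
Qed.

Lemma mem_pairmap (V : eqType) (x : V) (s : seq V) p :
  p \in pairmap pair x s -> p.1 \in x :: s /\ p.2 \in x :: s.
Proof.
elim: s x => [|y s IH] x //= /predU1P [-> | /IH [H1 H2]].
  by rewrite /= !inE !eqxx ?orbT.
by split; rewrite inE ?H1 ?H2 orbT.
Qed.

Lemma sum_const_seq (T : Type) (F : realFieldType) (s : seq T) (P : pred T) (a : F) :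
  \sum_(p <- s | P p) a = a * (count P s)%:R.
Proof.
elim: s => [|y s IH]; first by rewrite big_nil mulr0.
rewrite big_cons /= IH; case: (P y) => /=.
  by rewrite natrD mulrDr mulr1 addrC.
by rewrite add0n.
Qed.

Lemma card_part (V : finType) (f : V -> V) (A : {set V}) :
  #|A| = (\sum_(v in f @: A) #|[set u in A | f u == v]|)%N.
Proof.
rewrite -sum1_card (partition_big_imset f).
apply: eq_bigr => v _; rewrite -sum1_card; apply: eq_bigl => u; by rewrite inE.
Qed.

Lemma lp_part (V : finType) (F : realFieldType) (R : {set V}) (x : {set V} -> F) (f : V -> V) :
  lp_feasible R x ->
  (#|f @: R|%:R : F) - 1 <= \sum_(K | lp_index R K) x K * (#|f @: K|%:R - 1).
Proof.
move=> [Hx0 HS Heq].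
set I := f @: R.
pose S v := [set u in R | f u == v].
have HSsub : forall v, S v \subset R by move=> v; apply/subsetP => u; rewrite inE => /andP [].
have HSne : forall v, v \in I -> S v != set0.
  by move=> v /imsetP [u Hu ->]; apply/set0Pn; exists u; rewrite inE Hu eqxx.
have HKdec : forall K : {set V}, K \subset R -> (#|K|%:R : F) - 1 =
    (#|f @: K|%:R - 1) + \sum_(v in I | K :&: S v != set0) (#|K :&: S v|%:R - 1).
  move=> K KR.
  have Hidx : forall v, (v \in I) && (K :&: S v != set0) = (v \in f @: K).
    move=> v; apply/andP/imsetP.
      by move=> [_ /set0Pn [u]]; rewrite !inE => /and3P [Hu _ /eqP <-]; exists u.
    move=> [u Hu ->]; split; first by apply: imset_f; apply: (subsetP KR).
    by apply/set0Pn; exists u; rewrite !inE Hu (subsetP KR) //= eqxx.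
  rewrite (eq_bigl (fun v => v \in f @: K)) //.
  have HK : #|K| = (\sum_(v in f @: K) #|K :&: S v|)%N.
    rewrite (card_part f K); apply: eq_bigr => v _; apply: eq_card => u.
    by rewrite !inE; case Hu: (u \in K) => //=; rewrite (subsetP KR).
  rewrite sumrB sumr_const -natr_sum -HK.
  by rewrite [RHS]addrC addrA subrK.
set A := \sum_(K | lp_index R K) x K * (#|f @: K|%:R - 1).
set B := \sum_(v in I) \sum_(K | lp_index R K && (K :&: S v != set0)) x K * (#|K :&: S v|%:R - 1).
have Hsum1 : \sum_(K | lp_index R K) x K * (#|K|%:R - 1) = A + B.
  rewrite /A /B.
  rewrite (eq_bigr (fun K => x K * (#|f @: K|%:R - 1) +
     \sum_(v in I | K :&: S v != set0) x K * (#|K :&: S v|%:R - 1))); last first.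
    move=> K; rewrite /lp_index => /and3P [KR _ _].
    by rewrite HKdec // mulrDr mulr_sumr.
  rewrite big_split /=; congr (_ + _).
  under eq_bigr do rewrite big_mkcondr.
  rewrite exchange_big /=; apply: eq_bigr => v _.
  by rewrite -big_mkcondr.
have HB : B <= #|R|%:R - #|I|%:R.
  apply: (le_trans (y := \sum_(v in I) ((#|S v|%:R : F) - 1))).
    by apply: ler_sum => v Hv; apply: HS; [apply: HSsub | apply: HSne].
  rewrite sumrB sumr_const -natr_sum (card_part f R).
  by rewrite lerD2r.
have HA : A = #|R|%:R - 1 - B by rewrite -Heq Hsum1 addrK.
rewrite HA.
have -> : (#|I|%:R : F) - 1 = #|R|%:R - 1 - (#|R|%:R - #|I|%:R).
  by rewrite opprB [RHS]addrC addrA subrK.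
by rewrite lerD2l lerN2.
Qed.


Unset Implicit Arguments. Set Strict Implicit.

Theorem lemma2 (V : finType) (F : realFieldType) (c : {set V} -> F)
  (R : {set V})
  (c_nonneg : forall e : {set V}, is_edge e -> 0 <= c e)
  (c_triangle : forall u v w : V, u != v -> v != w -> u != w ->
     c [set u; w] <= c [set u; v] + c [set v; w]) :
  forall x : {set V} -> F, lp_feasible R x ->
    mst_cost c R <= 2 * lp_objective c R x.
Proof.
move=> x Hfeas.
have Hc : cnonneg c := c_nonneg.
have Ht : ctri c := c_triangle.
case: (Hfeas) => Hx0 _ _.
have Hdata : forall K : {set V}, exists d : option (V * seq V),
   match d with
   | Some (k0, t) => [/\ lp_index R K, (forall z, z \in k0 :: t -> z \in K),
        (forall z, z \in K -> z \in k0 :: t) & pcost c k0 t <= 2%:R * CK c R K]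
   | None => lp_index R K = false end.
  move=> K; case HK: (lp_index R K); last by exists None.
  move: (HK); rewrite /lp_index => /and3P [KR K2 /asboolP [E0 HE0]].
  have [HEK _] := argmin_any (P := fun E => asbool (is_full_component R K E))
     (tree_cost c) set0 (asboolT HE0).
  have K0 : K != set0 by rewrite -card_gt0; apply: leq_trans K2.
  have [k0 [t [H1 H2 H3]]] := fullcomp_path Hc Ht (asboolP HEK) K0.
  by exists (Some (k0, t)); split.
have [d Hd] : exists d : {set V} -> option (V * seq V), forall K, match d K with
   | Some (k0, t) => [/\ lp_index R K, (forall z, z \in k0 :: t -> z \in K),
        (forall z, z \in K -> z \in k0 :: t) & pcost c k0 t <= 2%:R * CK c R K]
   | None => lp_index R K = false end.
  exists (fun K => proj1_sig (constructive_indefinite_description _ (Hdata K))).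
  move=> K; exact: (proj2_sig (constructive_indefinite_description _ (Hdata K))).
pose pairsK K := match d K with Some (k0, t) => pairmap pair k0 t | None => [::] end.
pose L := flatten [seq [seq (x K, p) | p <- pairsK K] | K <- enum [pred K | lp_index R K]].
have HsumL : forall (Q : pred (F * (V * V))) (g : F * (V * V) -> F),
   \sum_(t <- L | Q t) g t = \sum_(K | lp_index R K) \sum_(p <- pairsK K | Q (x K, p)) g (x K, p).
  move=> Q g; rewrite /L big_flatten /= big_map big_enum /=.
  by apply: eq_bigr => K _; rewrite big_map.
have HL : forall t, t \in L -> [/\ 0 <= t.1, t.2.1 \in R & t.2.2 \in R].
  move=> tt /flattenP [r /mapP [K HK ->] /mapP [p Hp ->]] /=.
  rewrite mem_enum inE in HK.
  move: (Hd K) Hp; rewrite /pairsK; case: (d K) => [[k0 t]|]; last by rewrite HK.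
  move=> [HK' H1 H2 H3] /mem_pairmap [Hp1 Hp2].
  move: HK'; rewrite /lp_index => /and3P [KR _ _].
  by split; [exact: Hx0 | apply: (subsetP KR); apply: H1 ..].
have Hpart : forall f : V -> V, (#|f @: R|%:R : F) - 1 <= \sum_(t <- L | f t.2.1 != f t.2.2) t.1.
  move=> f; apply: le_trans (lp_part f Hfeas) _.
  rewrite HsumL /=; apply: ler_sum => K HK.
  rewrite sum_const_seq ler_wpM2l ?Hx0 //.
  move: (Hd K); rewrite /pairsK; case: (d K) => [[k0 t]|]; last by rewrite HK.
  move=> [_ H1 H2 _].
  have -> : K = [set z | z \in k0 :: t].
    by apply/setP => z; rewrite inE; apply/idP/idP; [apply: H2 | apply: H1].
  have Hn := path_img f k0 t; rewrite -(ler_nat F) natrD in Hn; by rewrite lerBlDl.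
have [E [HE1 HE2 HE3]] := main_conn Hc HL Hpart.
apply: le_trans (extract_tree Hc HE1 HE2) _.
apply: le_trans HE3 _.
have -> := HsumL predT (fun t => t.1 * pc c t.2.1 t.2.2).
rewrite /lp_objective mulr_sumr; apply: ler_sum => K HK /=.
move: (Hd K); rewrite /pairsK; case: (d K) => [[k0 t]|]; last by rewrite HK.
move=> [_ _ _ H3].
rewrite -mulr_sumr -pcost_pairmap [CK c R K * _]mulrC mulrA [2 * x K]mulrC -mulrA ler_wpM2l ?Hx0 //.
Qed.
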